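(* There exist sets $\{E_{\beta,\gamma}:0<\beta<\gamma\le1\}$, $E_{\beta,\gamma}\subset[1,2]$, such that each $E_{\beta,\gamma}$ is $(\beta,\gamma)$-Assouad regular, and there exists a constant $c\ge1$ such that for all $0<\beta<\gamma\le1$, all $\delta\in(0,1)$ and all intervals $I\subset[1,2]$ with $|I|>\delta$, $$N(E_{\beta,\gamma},\delta)\le c\,\delta^{-\beta},\qquad N(E_{\beta,\gamma}\cap I,\delta)\le c\,\big(\tfrac{\delta}{|I|}\big)^{-\gamma}.$$
   Context: $N(E,\delta)$ is the minimal number of intervals of length $\delta$ covering $E$. $\dim_{\mathrm M}E=\inf\{a>0:\exists c\ \forall\delta\in(0,1),\ N(E,\delta)\le c\delta^{-a}\}$. $\dim_{\mathrm A}E=\inf\{a>0:\exists c\text{ such that for all subintervals }I\subset[1,2]\text{ and }\delta\in(0,|I|),\ N(E\cap I,\delta)\le c\delta^{-a}|I|^a\}$. For $\theta\in[0,1]$, $\overline{\dim}_{\mathrm A,\theta}E=\inf\{a>0:\exists c\text{ such that for all }\delta\in(0,1)\text{ and subintervals }I\subset[1,2]\text{ with }|I|\ge\delta^\theta,\ N(E\cap I,\delta)\le c\delta^{-a}|I|^a\}$. A set $E\subset[1,2]$ is $(\beta,\gamma)$-Assouad regular if either $\gamma=0$, or $\dim_{\mathrm M}E=\beta$, $\dim_{\mathrm A}E=\gamma$ and $\overline{\dim}_{\mathrm A,\theta}E=\dim_{\mathrm A}E$ for all $\theta$ with $1>\theta>1-\beta/\gamma$. *)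

(* Defs.v *)
From HB Require Import structures.
From mathcomp Require Import all_boot all_order all_algebra.
From mathcomp Require Import all_classical all_reals all_analysis.
Set Implicit Arguments. Unset Strict Implicit. Unset Printing Implicit Defensive.
Import Order.TTheory GRing.Theory Num.Theory.
Local Open Scope classical_set_scope.
Local Open Scope ring_scope.

Section Defs.
Variable R : realType.

Definition icover (s : seq R) (d : R) : set R :=
  [set y | has (fun x => (x <= y) && (y <= x + d)) s].

Definition covnum (E : set R) (d : R) : R :=
  inf [set (size s)%:R | s in [set s : seq R | E `<=` icover s d]].

Definition dimM (E : set R) : R :=
  inf [set a | 0 < a /\ exists c : R, forall d, 0 < d < 1 ->
        covnum E d <= c * d `^ (- a)].

Definition dimA (E : set R) : R :=
  inf [set a | 0 < a /\ exists c : R, forall l r, 1 <= l -> l < r -> r <= 2 ->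
        forall d, 0 < d < r - l ->
        covnum (E `&` `[l, r]) d <= c * d `^ (- a) * (r - l) `^ a].

Definition udimA (theta : R) (E : set R) : R :=
  inf [set a | 0 < a /\ exists c : R, forall d, 0 < d < 1 ->
        forall l r, 1 <= l -> l <= r -> r <= 2 -> d `^ theta <= r - l ->
        covnum (E `&` `[l, r]) d <= c * d `^ (- a) * (r - l) `^ a].

Definition assouad_regular (beta gamma : R) (E : set R) : Prop :=
  gamma = 0 \/
  [/\ dimM E = beta, dimA E = gamma &
      forall theta, 0 <= theta -> 1 - beta / gamma < theta -> theta < 1 ->
        udimA theta E = dimA E].

End Defs.

(* Main.v *)
Require Import Defs.
From HB Require Import structures.
From mathcomp Require Import all_boot all_order all_algebra.
From mathcomp Require Import all_classical all_reals all_analysis.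
From mathcomp Require Import ring lra.
Import Order.TTheory GRing.Theory Num.Theory.
Local Open Scope classical_set_scope.
Local Open Scope ring_scope.
Section Gen.
Variable R : realType.
Implicit Types (t s : seq R) (d a : R).

Lemma covnum_le (E : set R) d s : E `<=` icover s d -> covnum E d <= (size s)%:R.
Proof.
move=> Es; rewrite /covnum.
have := @ge_inf R [set (size s)%:R | s in [set s : seq R | E `<=` icover s d]].
apply.
  exists 0 => _ [s' _ <-]; exact: ler0n.
by exists s.
Qed.

Lemma covnum_ge (E : set R) d (k : nat) :
  (exists s, E `<=` icover s d) ->
  (forall s, E `<=` icover s d -> (k <= size s)%N) -> k%:R <= covnum E d.
Proof.
move=> [s Es] H; rewrite /covnum; apply: lb_le_inf.
  by exists (size s)%:R; exists s.
by move=> _ [s' /H Hs' <-]; rewrite ler_nat.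
Qed.

Lemma seq_max t : t != [::] -> exists2 M, M \in t & forall x, x \in t -> x <= M.
Proof.
elim: t => // x t IH _.
case: (eqVneq t [::]) => [->|tn].
  by exists x; rewrite ?mem_head // => y; rewrite inE => /eqP ->.
have [M Mt HM] := IH tn.
case: (leP x M) => xM.
  exists M; first by rewrite inE Mt orbT.
  by move=> y; rewrite inE => /orP[/eqP ->|/HM].
exists x; first by rewrite mem_head.
move=> y; rewrite inE => /orP[/eqP ->//|/HM yM]; exact: le_trans yM (ltW xM).
Qed.

Lemma sep_count (n : nat) : forall t a d, 0 < d -> uniq t ->
  (forall x y, x \in t -> y \in t -> x != y -> d <= `|x - y|) ->
  (forall x, x \in t -> a <= x < a + n%:R * d) -> (size t <= n)%N.
Proof.
elim: n => [|n IH] t a d d0 ut sep int.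
  case: t ut sep int => // x t _ _ /(_ x (mem_head _ _)).
  by rewrite mul0r addr0 => /andP[h1 h2]; have := lt_le_trans h2 h1; rewrite ltxx.
case: (eqVneq t [::]) => [->//|tn].
have [M Mt HM] := seq_max t tn.
have Hs : size t = (size (rem M t)).+1 by rewrite size_rem // prednK // lt0n size_eq0.
rewrite Hs ltnS.
apply: (IH _ a d d0 (rem_uniq _ ut)).
  by move=> x y /mem_rem xt /mem_rem yt; apply: sep.
move=> x xr.
have xt := mem_rem xr.
have xM : x != M by apply/eqP => exM; move: xr; rewrite exM mem_rem_uniqF.
have := sep _ _ xt Mt xM.
have := HM _ xt.
have /andP[h1 h2] := int _ xt.
have /andP[h3 h4] := int _ Mt.
rewrite h1 /=.
move=> xleM; rewrite ler0_norm ?subr_le0 // => hd.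
rewrite -natr1 mulrDl mul1r in h4.
lra.
Qed.

Lemma cover_lb s : forall t d, uniq t ->
  (forall x y, x \in t -> y \in t -> x != y -> d < `|x - y|) ->
  (forall x, x \in t -> icover s d x) -> (size t <= size s)%N.
Proof.
elim: s => [|y s IH] t d ut sep cov.
  by case: t ut sep cov => // x t _ _ /(_ x (mem_head _ _)).
pose P := fun x => (y <= x) && (x <= y + d).
rewrite -(count_predC P t) /= -add1n leq_add //.
  rewrite -size_filter.
  have uf : uniq [seq x <- t | P x] by rewrite filter_uniq.
  have : forall x, x \in [seq x <- t | P x] -> (x \in t) && P x.
    by move=> x; rewrite mem_filter andbC.
  case: [seq x <- t | P x] uf => // x1 [|x2 l] //= /andP[+ _].
  rewrite inE negb_or => /andP[x12 _] H.
  have /andP[x1t /andP[h1 h2]] := H x1 (mem_head _ _).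
  have x2in : x2 \in [:: x1, x2 & l] by rewrite !inE eqxx orbT.
  have /andP[x2t /andP[h3 h4]] := H x2 x2in.
  have := sep _ _ x1t x2t x12.
  case: (lerP 0 (x1 - x2)) => hh; [rewrite ger0_norm // | rewrite ltr0_norm //]; lra.
rewrite -size_filter.
apply: IH; first by rewrite filter_uniq.
  by move=> x1 x2; rewrite !mem_filter => /andP[_ ?] /andP[_ ?]; apply: sep.
move=> x; rewrite mem_filter => /andP[nP xt].
have := cov _ xt; rewrite /icover /= => /orP[hP|//].
by rewrite /predC /= /P hP in nP.
Qed.

End Gen.
Section Pattern.
Variable R : realType.
Variable p : R.
Hypothesis p0 : 0 < p.
Hypothesis p1 : p < 1.

Fixpoint Az (j : nat) : nat := if j is j'.+1 then (j'.+1 ^ 2 * Az j')%N else 1%N.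
Definition act (i : nat) : bool := `[< ~ exists j, (Az j <= i < j.+1 * Az j)%N >].
Fixpoint fc (n : nat) : nat :=
  if n is n'.+1 then addn (fc n') (act n' && ((fc n').+1%:R <= p * n'.+1%:R)) else 0%N.
Definition sp (i : nat) : bool := act i && ((fc i).+1%:R <= p * i.+1%:R).

Lemma fcS n : fc n.+1 = (fc n + sp n)%N.
Proof. by []. Qed.

Lemma fc_le n : (fc n)%:R <= p * n%:R.
Proof.
elim: n => [|n IH]; first by rewrite mulr0.
rewrite fcS /sp; case: (act n) => /=; last first.
  by rewrite addn0 (le_trans IH) // ler_wpM2l ?(ltW p0) // ler_nat.
case h: ((fc n).+1%:R <= p * n.+1%:R) => /=; first by rewrite addn1.
by rewrite addn0 (le_trans IH) // ler_wpM2l ?(ltW p0) // ler_nat.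
Qed.

Lemma fc_cnt k m : fc (k + m) = (fc k + count sp (iota k m))%N.
Proof.
elim: m => [|m IH]; first by rewrite /= !addn0.
by rewrite addnS fcS IH -addn1 iotaD count_cat /= addn0 addnA.
Qed.

Lemma Az_gt0 j : (0 < Az j)%N.
Proof. by elim: j => //= j IH; rewrite muln_gt0 IH expn_gt0. Qed.

Lemma Az_step j : (j.+1 * Az j <= Az j.+1)%N.
Proof.
rewrite /= leq_mul2r; apply/orP; right.
by rewrite expnS leq_pmulr.
Qed.

Lemma Az_mono j j' : (j <= j')%N -> (Az j <= Az j')%N.
Proof.
move/subnKC <-; elim: (j' - j)%N => [|m IH]; first by rewrite addn0.
rewrite addnS (leq_trans IH) // (leq_trans _ (Az_step _)) // leq_pmull //.
Qed.

Arguments Az_mono {j j'}.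

Lemma act_zone j i : (Az j <= i < j.+1 * Az j)%N -> act i = false.
Proof. by move=> h; apply: asboolF => H; apply: H; exists j. Qed.

Lemma act_free j i : (j.+1 * Az j <= i < Az j.+1)%N -> act i.
Proof.
move=> /andP[h1 h2]; apply: asboolT => -[j' /andP[h3 h4]].
case: (leqP j' j) => hj.
  have : (j'.+1 * Az j' <= j.+1 * Az j)%N.
    case: (ltngtP j' j) => [hlt|hgt|->//]; last by rewrite leqNgt hgt in hj.
    apply: (leq_trans (Az_step j')).
    apply: (leq_trans (Az_mono hlt)).
    by rewrite leq_pmull.
  move=> hh; have := leq_trans hh h1; rewrite leqNgt h4 //.
have := Az_mono hj; move=> hh; have := leq_trans hh h3.
by rewrite leqNgt h2.
Qed.

Lemma fc_zone j : fc (j.+1 * Az j) = fc (Az j).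
Proof.
have : forall m, (Az j + m <= j.+1 * Az j)%N -> fc (Az j + m) = fc (Az j).
  elim=> [|m IH h]; first by rewrite addn0.
  rewrite addnS fcS IH; last by rewrite (leq_trans _ h) // leq_add2l.
  rewrite /sp (@act_zone j) ?addn0 //.
  by rewrite leq_addr /= -addnS.
move=> /(_ (j.+1 * Az j - Az j)%N); rewrite subnKC //; first by apply.
by rewrite leq_pmull.
Qed.

Lemma run b n : (b <= n)%N -> (forall i, (b <= i < n)%N -> act i) ->
  ((fc b + (n - b))%:R <= p * n%:R) -> fc n = (fc b + (n - b))%N.
Proof.
have hp0 := p0; have hp1 := p1.
move=> bn Hact H.
have : forall m, (m <= n - b)%N -> fc (b + m) = (fc b + m)%N.
  elim=> [|m IH hm]; first by rewrite !addn0.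
  rewrite addnS fcS IH ?(ltnW hm) // /sp Hact; last first.
    by rewrite leq_addr /= -ltn_subRL.
  rewrite /= IH ?(ltnW hm) //.
  have -> : (((fc b + m).+1)%:R <= p * (b + m).+1%:R) = true.
    apply/idP.
    have hbm : ((b + m).+1 <= n)%N by rewrite -addnS -leq_subRL.
    move: H; rewrite natrD natrB // => H.
    have e1 : ((fc b + m).+1%:R : R) = (fc b)%:R + m%:R + 1 by rewrite -addn1 !natrD.
    have e2 : ((b + m).+1%:R : R) = b%:R + m%:R + 1 by rewrite -addn1 !natrD.
    have hh : b%:R + m%:R + 1 <= n%:R :> R by rewrite -e2 ler_nat.
    rewrite e1 e2.
    have h2 : 0 <= (1 - p) * (n%:R - (b%:R + m%:R + 1)).
      apply: mulr_ge0; lra.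
    nra.
  by rewrite addn1 addnS.
move=> /(_ (n - b)%N (leqnn _)); by rewrite subnKC.
Qed.

Lemma main_run (th M : R) : 1 - p < th -> th <= 1 ->
  exists b n : nat, [/\ (b <= n)%N, b%:R <= th * n%:R, M <= (n - b)%:R,
    count sp (iota b (n - b)) = (n - b)%N & p * n%:R - 1 <= (fc n)%:R].
Proof.
have hp0 := p0; have hp1 := p1.
move=> th1 th2.
set eta := th - (1 - p).
have eta0 : 0 < eta by rewrite /eta; lra.
set X := (1 - p)^-1 + eta^-1 + (`|M| + 2) / p.
set j := (Num.trunc X).+1.
have hjX : X < j%:R by apply: truncnS_gt.
have q0 : 0 < 1 - p by lra.
have hX1 : 0 <= (`|M| + 2) / p.
  apply: divr_ge0; [by rewrite addr_ge0 | exact: ltW].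
have hX2 : 0 <= eta^-1 by rewrite invr_ge0 ltW.
have hX3 : 0 <= (1 - p)^-1 by rewrite invr_ge0 ltW.
have hj1 : 1 <= (1 - p) * j%:R.
  rewrite -ler_pdivrMl // mulr1; rewrite /X in hjX; lra.
have hj2 : 1 <= eta * j%:R.
  rewrite -ler_pdivrMl // mulr1; rewrite /X in hjX; lra.
have hj3 : `|M| + 2 <= p * j%:R.
  rewrite -ler_pdivrMl // mulrC; rewrite /X in hjX; lra.
set A := Az j.
have A1 : 1 <= A%:R :> R by rewrite ler1n Az_gt0.
set b := (j.+1 * A)%N.
have hb : b%:R = j.+1%:R * A%:R :> R by rewrite natrM.
have fb : (fc b)%:R <= p * A%:R by rewrite /b /A fc_zone fc_le.
set x := (b%:R - (fc b)%:R) / (1 - p).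
have x0 : 0 <= x.
  rewrite /x divr_ge0 ?(ltW q0) // subr_ge0.
  apply: (le_trans fb); rewrite hb.
  have hj0 : 1 <= j.+1%:R :> R by rewrite ler1n.
  nra.
set n := Num.trunc x.
have /andP[nx xn] := truncn_itv x0.
rewrite -/n in nx xn.
have hn1 : (1 - p) * n%:R <= b%:R - (fc b)%:R.
  by rewrite mulrC -ler_pdivlMr.
have hn2 : b%:R - (fc b)%:R < (1 - p) * n.+1%:R.
  by rewrite mulrC -ltr_pdivrMr.
rewrite -natr1 in hn2.
have hbn : (b <= n)%N.
  rewrite truncn_ge_nat // /x ler_pdivlMr //.
  have : (fc b)%:R <= p * b%:R.
    apply: (le_trans fb); rewrite ler_wpM2l ?(ltW p0) // hb.
    by rewrite ler_peMl ?(le_trans _ A1) // ler1n.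
  lra.
have hnA : (n <= Az j.+1)%N.
  have -> : Az j.+1 = (j.+1 * b)%N by rewrite /b mulnA.
  rewrite -(ler_nat R) natrM.
  have fb0 : 0 <= (fc b)%:R :> R by [].
  have hb0 : 0 <= b%:R :> R by [].
  have h1 : (1 - p) * n%:R <= (1 - p) * (j%:R * b%:R).
    have : b%:R <= (1 - p) * j%:R * b%:R :> R.
      by rewrite -{1}(mul1r b%:R) ler_wpM2r.
    rewrite mulrA; lra.
  rewrite ler_pM2l // in h1.
  apply: (le_trans h1); rewrite ler_wpM2r // ler_nat //.
have Hrun : fc n = (fc b + (n - b))%N.
  apply: run => //.
    move=> i /andP[h1 h2]; apply: (@act_free j).
    by rewrite h1 /= (leq_trans h2 hnA).
  rewrite natrD natrB //; lra.
exists b, n; split => //.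
-
  have hB : (1 - p) * b%:R <= th * ((1 - p) * n%:R).
    have e1 : (j.+1%:R - p) * A%:R - (1 - p) < (1 - p) * n%:R.
      rewrite hb in hn2 fb; nra.
    have e2 : th * ((j.+1%:R - p) * A%:R) - (1 - p) <= th * ((1 - p) * n%:R).
      have : th * ((j.+1%:R - p) * A%:R - (1 - p)) <= th * ((1 - p) * n%:R).
        rewrite ler_wpM2l //; [lra | exact: ltW].
      have : th * (1 - p) <= 1 - p by rewrite ler_piMl //; lra.
      lra.
    have e3 : 1 - p <= th * (j.+1%:R - p) - (1 - p) * j.+1%:R.
      rewrite -natr1; rewrite /eta in hj2; nra.
    have e4 : 1 - p <= (th * (j.+1%:R - p) - (1 - p) * j.+1%:R) * A%:R.
      apply: (le_trans e3); rewrite ler_peMr //; lra.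
    rewrite hb; nra.
  rewrite mulrCA in hB; rewrite -(ler_pM2l q0); exact: hB.
-
  rewrite natrB //.
  have e1 : (j.+1%:R - p) * A%:R - (1 - p) < (1 - p) * n%:R.
    rewrite hb in hn2 fb; nra.
  have e2 : (1 - p) * (p * j%:R - 1) <= (1 - p) * (n%:R - b%:R).
    rewrite hb -natr1; rewrite -natr1 in e1.
    have : p * j%:R <= p * j%:R * A%:R by rewrite ler_peMr //; nra.
    nra.
  rewrite ler_pM2l // in e2.
  have : M <= `|M| by apply: ler_norm.
  lra.
- have h := fc_cnt b (n - b); rewrite subnKC // Hrun in h.
  by move/addnI: h.
- rewrite Hrun natrD natrB //; lra.
Qed.

End Pattern.
Section Cantor.
Variable R : realType.
Variable rho : R.
Variable sp : nat -> bool.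

Definition wt (i : nat) : R := (1 - rho) * rho ^+ i.

Fixpoint AS (k m : nat) : seq R :=
  if m is m'.+1 then
    (if sp (k + m') then AS k m' ++ [seq x + wt (k + m') | x <- AS k m'] else AS k m')
  else [:: 0].

Definition Eset : set R := [set x | exists n, exists2 v, v \in AS 0 n & x = 1 + v].

Lemma AS_size k m : size (AS k m) = (2 ^ count sp (iota k m))%N.
Proof.
elim: m => [|m IH] //.
have -> : iota k m.+1 = iota k m ++ [:: k + m] by rewrite -addn1 iotaD.
rewrite /= count_cat /= addn0 expnD.
case: (sp (k + m)) => /=; last by rewrite muln1.
by rewrite size_cat size_map IH muln2 addnn.
Qed.

Lemma AS_0 k m : 0 \in AS k m.
Proof.
elim: m => [|m IH] /=; first by rewrite mem_head.
by case: (sp (k + m)) => //; rewrite mem_cat IH.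
Qed.

Hypothesis rho0 : 0 < rho.
Hypothesis rho2 : 2 * rho <= 1.

Lemma AS_bnd k m v : v \in AS k m -> 0 <= v <= rho ^+ k - rho ^+ (k + m).
Proof.
have r0 := rho0; have r2 := rho2.
elim: m v => [|m IH] v /=.
  by rewrite inE addn0 subrr => /eqP ->; rewrite lexx.
have hk : rho ^+ (k + m.+1) = rho ^+ (k + m) * rho by rewrite addnS exprSr.
have hp : 0 <= rho ^+ (k + m) by rewrite exprn_ge0 // ltW.
case: (sp (k + m)) => [|/IH]; last first.
  move=> /andP[h1 h2]; rewrite h1 /= hk; nra.
rewrite mem_cat => /orP[/IH /andP[h1 h2]|/mapP[x /IH /andP[h1 h2] ->]].
  rewrite h1 /= hk; nra.
rewrite /wt hk; apply/andP; split; nra.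
Qed.

Lemma AS_sep k m : uniq (AS k m) /\
  forall x y, x \in AS k m -> y \in AS k m -> x != y -> rho ^+ (k + m) <= `|x - y|.
Proof.
have r0 := rho0; have r2 := rho2.
elim: m => [|m [IHu IHs]] /=.
  by split => // x y; rewrite !inE => /eqP -> /eqP ->; rewrite eqxx.
have hk : rho ^+ (k + m.+1) = rho ^+ (k + m) * rho by rewrite addnS exprSr.
have hp : 0 < rho ^+ (k + m) by rewrite exprn_gt0.
have hw : wt (k + m) = (1 - rho) * rho ^+ (k + m) by [].
have hle : rho ^+ (k + m.+1) <= rho ^+ (k + m) by rewrite hk; nra.
case: (sp (k + m)); last first.
  split => // x y hx hy hxy; exact: le_trans hle (IHs _ _ hx hy hxy).
have cross : forall x y, x \in AS k m -> y \in AS k m ->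
    rho ^+ (k + m.+1) <= `|x - (y + wt (k + m))|.
  move=> x y hx hy.
  case: (eqVneq x y) => [->|hxy].
    rewrite opprD addrA subrr add0r normrN hw hk ger0_norm; nra.
  have := IHs _ _ hx hy hxy.
  have e : x - (y + wt (k + m)) = (x - y) - wt (k + m) by rewrite opprD addrA.
  rewrite e hw hk => h.
  have W0 : 0 <= (1 - rho) * rho ^+ (k + m) by nra.
  have h3 := lerB_dist (x - y) ((1 - rho) * rho ^+ (k + m)).
  rewrite (ger0_norm W0) in h3.
  nra.
split.
  rewrite cat_uniq IHu /= (map_inj_uniq (addIr _)) IHu andbT.
  apply/hasPn => z /mapP[y hy ->]; apply/negP => hz.
  have := cross _ _ hz hy; rewrite subrr normr0 hk => h; nra.
move=> x y; rewrite !mem_cat => /orP[hx|/mapP[x' hx ->]] /orP[hy|/mapP[y' hy ->]] hxy.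
- exact: le_trans hle (IHs _ _ hx hy hxy).
- exact: cross.
- by rewrite distrC; apply: cross.
- have hxy' : x' != y' by apply: contraNneq hxy => ->.
  have e : x' + wt (k + m) - (y' + wt (k + m)) = x' - y'.
    by rewrite opprD addrACA subrr addr0.
  rewrite e; exact: le_trans hle (IHs _ _ hx hy hxy').
Qed.

End Cantor.
Section Cantor2.
Variable R : realType.
Variable rho : R.
Variable sp : nat -> bool.
Local Notation AS := (@AS R rho sp).
Local Notation Eset := (@Eset R rho sp).

Lemma AS_split k m v : v \in AS 0 (k + m) <->
  exists2 u, u \in AS 0 k & exists2 v', v' \in AS k m & v = u + v'.
Proof.
elim: m v => [|m IH] v.
  rewrite addn0; split => [hv|[u hu [v' hv' ->]]].
    by exists v => //; exists 0; rewrite ?addr0 ?mem_head.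
  by move: hv'; rewrite inE => /eqP ->; rewrite addr0.
rewrite addnS /= add0n.
case: (sp (k + m)); last exact: IH.
split.
  rewrite mem_cat => /orP[/IH [u hu [v' hv' ->]]|/mapP[x /IH [u hu [v' hv' ->]] ->]].
    by exists u => //; exists v' => //; rewrite mem_cat hv'.
  exists u => //; exists (v' + @wt R rho (k + m)); last by rewrite addrA.
  by rewrite mem_cat; apply/orP; right; apply: map_f.
move=> [u hu [v']]; rewrite mem_cat => /orP[hv' ->|/mapP[y hy ->] ->].
  by rewrite mem_cat; apply/orP; left; apply/IH; exists u => //; exists v'.
rewrite mem_cat; apply/orP; right; rewrite addrA; apply: map_f.
by apply/IH; exists u => //; exists y.
Qed.

Lemma AS_mono N M v : (N <= M)%N -> v \in AS 0 N -> v \in AS 0 M.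
Proof.
move=> hNM hv; rewrite -(subnKC hNM); apply/AS_split.
by exists v => //; exists 0; rewrite ?addr0 // AS_0.
Qed.

Hypothesis rho0 : 0 < rho.
Hypothesis rho2 : 2 * rho <= 1.

Lemma AS_trunc y n : Eset y -> exists2 u, u \in AS 0 n & 0 <= y - 1 - u <= rho ^+ n.
Proof.
move=> [N [v hv ->]].
have hv' : v \in AS 0 (n + (maxn N n - n)).
  by rewrite subnKC ?leq_maxr //; apply: AS_mono hv; rewrite leq_maxl.
have [u hu [v' hv'' ev]] := (AS_split _ _ _).1 hv'.
exists u => //.
have /andP[h1 h2] := AS_bnd R rho sp rho0 rho2 _ _ _ hv''.
have h3 : 0 <= rho ^+ (n + (maxn N n - n)) by rewrite exprn_ge0 // ltW.
rewrite ev; apply/andP; split; [lra|lra].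
Qed.

Lemma Eset_in n u : u \in AS 0 n -> Eset (1 + u).
Proof. by move=> hu; exists n; exists u. Qed.

Lemma Eset_sub : Eset `<=` `[1, 2].
Proof.
move=> y [n [v hv ->]]; have /andP[h1 h2] := AS_bnd R rho sp rho0 rho2 _ _ _ hv.
have h3 : 0 <= rho ^+ (0 + n) by rewrite exprn_ge0 // ltW.
rewrite expr0 in h2.
by rewrite /= in_itv /=; apply/andP; split; lra.
Qed.

Lemma cov_glob n d : rho ^+ n <= d ->
  covnum Eset d <= (2 ^ count sp (iota 0 n))%:R.
Proof.
move=> hd; rewrite -(AS_size R rho sp 0 n).
rewrite -(size_map (fun u => 1 + u)).
apply: covnum_le => y Ey.
have [u hu /andP[h1 h2]] := AS_trunc _ n Ey.
apply/hasP; exists (1 + u); first exact: map_f.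
apply/andP; split; lra.
Qed.

Lemma cov_loc k n d l r : (k <= n)%N -> rho ^+ n <= d -> l <= r -> r - l <= rho ^+ k ->
  covnum (Eset `&` `[l, r]) d <= (3 * 2 ^ count sp (iota k (n - k)))%:R.
Proof.
move=> hkn hd hlr hrl.
have rk0 : 0 < rho ^+ k by rewrite exprn_gt0.
pose P := fun u => (l - 1 - rho ^+ k <= u) && (u <= r - 1).
pose t := [seq u <- AS 0 k | P u].
pose s := [seq 1 + u + v | u <- t, v <- AS k (n - k)].
have ht : (size t <= 3)%N.
  have [hu hs] := AS_sep R rho sp rho0 rho2 0 k.
  apply: (@sep_count _ 3 t (l - 1 - rho ^+ k) (rho ^+ k)) => //.
  - by rewrite filter_uniq.
  - move=> x y; rewrite !mem_filter => /andP[_ hx] /andP[_ hy] hxy.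
    by have := hs _ _ hx hy hxy; rewrite add0n.
  - move=> x; rewrite mem_filter => /andP[/andP[h1 h2] _].
    apply/andP; split => //; lra.
apply: (le_trans (covnum_le _ _ d s _)).
  move=> y [Ey]; rewrite /= in_itv /= => /andP[hly hyr].
  have [u0 hu0 /andP[h1 h2]] := AS_trunc _ n Ey.
  have hu0' : u0 \in AS 0 (k + (n - k)) by rewrite subnKC.
  have [u hu [v hv ev]] := (AS_split _ _ _).1 hu0'.
  have /andP[h3 h4] := AS_bnd R rho sp rho0 rho2 _ _ _ hv.
  have /andP[h5 h6] := AS_bnd R rho sp rho0 rho2 _ _ _ hu.
  rewrite subnKC // in h4.
  have rn0 : 0 <= rho ^+ n by rewrite exprn_ge0 // ltW.
  apply/hasP; exists (1 + u + v).
    apply: allpairs_f => //; rewrite mem_filter hu andbT /P.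
    apply/andP; split; lra.
  apply/andP; split; lra.
rewrite /s size_allpairs AS_size ler_nat leq_mul2r ht orbT //.
Qed.

End Cantor2.
Lemma lb_pts (R : realType) (E : set R) (d : R) (t : seq R) :
  (exists s, E `<=` icover s d) -> uniq t ->
  (forall x y, x \in t -> y \in t -> x != y -> d < `|x - y|) ->
  (forall x, x \in t -> E x) -> (size t)%:R <= covnum E d.
Proof.
move=> hex ut sep ht; apply: covnum_ge => // s hs.
apply: cover_lb ut sep _ => x /ht; exact: hs.
Qed.

Section Cantor3.
Variable R : realType.
Variable rho : R.
Variable sp : nat -> bool.
Local Notation AS := (@AS R rho sp).
Local Notation Eset := (@Eset R rho sp).
Hypothesis rho0 : 0 < rho.
Hypothesis rho2 : 2 * rho <= 1.

Lemma rho_small e : 0 < e -> exists n, rho ^+ n < e.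
Proof.
have r0 := rho0; have r2 := rho2.
move=> e0; set n := Num.trunc (e^-1).
have hn : e^-1 < n.+1%:R by apply: truncnS_gt.
exists n.
have h1 : rho ^+ n * 2 ^+ n <= 1.
  by rewrite -exprMn mulrC exprn_ile1 // mulr_ge0 // ltW.
have h2 : (n.+1%:R : R) <= 2 ^+ n by rewrite -natrX ler_nat ltn_expl.
have h3 : 0 <= rho ^+ n by rewrite exprn_ge0 // ltW.
have h4 : 1 < e * n.+1%:R.
  by rewrite -ltr_pdivrMl // mulr1.
have h5 : rho ^+ n * n.+1%:R <= 1 by apply: le_trans (ler_wpM2l h3 h2) h1.
have hN : 0 < (n.+1%:R : R) by [].
rewrite -(ltr_pM2r hN); lra.
Qed.

Lemma cover_ex (E : set R) (d : R) : E `<=` Eset -> 0 < d -> exists s, E `<=` icover s d.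
Proof.
move=> hE d0; have [m hm] := rho_small _ d0.
exists [seq 1 + u | u <- AS 0 m] => y /hE Ey.
have [u hu /andP[h1 h2]] := AS_trunc R rho sp rho0 rho2 _ m Ey.
apply/hasP; exists (1 + u); first exact: map_f.
apply/andP; split; lra.
Qed.

Lemma lb_glob n (d : R) : 0 < d -> d < rho ^+ n ->
  (2 ^ count sp (iota 0 n))%:R <= covnum Eset d.
Proof.
move=> d0 dn; rewrite -(AS_size R rho sp 0 n) -(size_map (fun u => 1 + u)).
have [hu hs] := AS_sep R rho sp rho0 rho2 0 n.
apply: lb_pts.
- exact: cover_ex.
- by rewrite (map_inj_uniq (addrI _)).
- move=> x y /mapP[a ha ->] /mapP[b hb ->] hxy.
  have hab : a != b by apply: contraNneq hxy => ->.
  have := hs _ _ ha hb hab; rewrite add0n.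
  have -> : 1 + a - (1 + b) = a - b by rewrite opprD addrACA subrr add0r.
  move=> h; exact: lt_le_trans dn h.
- by move=> x /mapP[a ha ->]; apply: (Eset_in R rho sp n a ha).
Qed.

Lemma lb_loc k n (d : R) : (k <= n)%N -> 0 < d -> d < rho ^+ n ->
  (2 ^ count sp (iota k (n - k)))%:R <= covnum (Eset `&` `[1, 1 + rho ^+ k]) d.
Proof.
move=> hkn d0 dn; rewrite -(AS_size R rho sp k (n - k)) -(size_map (fun u => 1 + u)).
have [hu hs] := AS_sep R rho sp rho0 rho2 k (n - k).
apply: lb_pts.
- by apply: cover_ex => // y [].
- by rewrite (map_inj_uniq (addrI _)).
- move=> x y /mapP[a ha ->] /mapP[b hb ->] hxy.
  have hab : a != b by apply: contraNneq hxy => ->.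
  have := hs _ _ ha hb hab; rewrite subnKC //.
  have -> : 1 + a - (1 + b) = a - b by rewrite opprD addrACA subrr add0r.
  move=> h; exact: lt_le_trans dn h.
- move=> x /mapP[a ha ->]; split.
    apply: (Eset_in R rho sp (k + (n - k)) a).
    apply/(AS_split R rho sp k (n - k) a).
    by exists 0; [exact: AS_0 | exists a => //; rewrite add0r].
  have /andP[h1 h2] := AS_bnd R rho sp rho0 rho2 _ _ _ ha.
  have h3 : 0 <= rho ^+ (k + (n - k)) by rewrite exprn_ge0 // ltW.
  by rewrite /= in_itv /=; apply/andP; split; lra.
Qed.

End Cantor3.
Definition rhoG (R : realType) (g : R) : R := 2 `^ (- g^-1).
Arguments rhoG {R}.
Definition EE (R : realType) (b g : R) : set R := Eset R (rhoG g) (sp R (b / g)).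
Arguments EE {R}.

Lemma P_add {R : realType} (x y : R) : 2 `^ (x + y) = 2 `^ x * 2 `^ y.
Proof. by rewrite powRD // pnatr_eq0 implybT. Qed.

Lemma P_nat {R : realType} n : 2 `^ (n%:R : R) = 2 ^+ n.
Proof. by rewrite powR_mulrn. Qed.

Lemma P_le {R : realType} {x y : R} : x <= y -> 2 `^ x <= 2 `^ y.
Proof. by move=> h; apply: ler_powR => //; rewrite ler1n. Qed.

Lemma P_N {R : realType} (x : R) : 2 `^ (- x) = (2 `^ x)^-1.
Proof. exact: powRN. Qed.

Lemma P_big {R : realType} (x C : R) : `|C| / ln 2 < x -> C < 2 `^ x.
Proof.
move=> h.
have l2 : 0 < ln (2 : R) by rewrite ln_gt0 // ltr1n.
have e : 2 `^ x = expR (x * ln 2) by rewrite /powR pnatr_eq0.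
rewrite e; apply: lt_le_trans (expR_ge1Dx _).
rewrite ltr_pdivrMr // in h.
have := ler_norm C; lra.
Qed.

Lemma powRV {R : realType} (y s : R) : 0 <= y -> (y^-1) `^ s = (y `^ s)^-1.
Proof.
move=> y0; rewrite -powR_inv1 // -powRrM mulN1r powRN //.
Qed.

Lemma powR_div_neg {R : realType} (x y s : R) : 0 <= x -> 0 < y ->
  (x / y) `^ (- s) = x `^ (- s) * y `^ s.
Proof.
move=> x0 y0; rewrite powRM // ?invr_ge0 ?ltW // powRV ?ltW //.
by rewrite (powRN y s) invrK.
Qed.

Section Main.
Variable R : realType.
Variables b g : R.
Hypothesis hb0 : 0 < b.
Hypothesis hbg : b < g.
Hypothesis hg1 : g <= 1.

Local Notation p := (b / g).
Local Notation rho := (rhoG g).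
Local Notation E := (EE b g).

Lemma g0 : 0 < g. Proof. exact: lt_trans hb0 hbg. Qed.
Lemma p0 : 0 < p. Proof. by rewrite divr_gt0 // g0. Qed.
Lemma p1 : p < 1. Proof. by rewrite ltr_pdivrMr ?g0 // mul1r. Qed.

Lemma rho0 : 0 < rho. Proof. by rewrite /rhoG powR_gt0. Qed.

Lemma rho2 : 2 * rho <= 1.
Proof.
have hg := g0.
have h : - g^-1 <= -1.
  rewrite lerN2 -[X in X <= _]invr1 lef_pV2 ?posrE //.
have := P_le h; rewrite powR_inv1 ?ler0n // -/(rhoG g) => hr.
have h2 : (2 : R) * 2^-1 = 1 by rewrite mulfV // pnatr_eq0.
have h3 : (0 : R) < 2 by rewrite ltr0n.
by rewrite -[X in _ <= X]h2 ler_pM2l.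
Qed.

Lemma rho1 : rho <= 1.
Proof. have := rho2; have := rho0; lra. Qed.

Lemma rhoX m s : (rho ^+ m) `^ s = 2 `^ (- (m%:R * s / g)).
Proof.
rewrite -powR_mulrn ?(ltW rho0) // /rhoG -!powRrM.
congr (2 `^ _); rewrite mulrC; ring.
Qed.

Lemma scale (x : R) : 0 < x -> x <= 1 -> exists k, rho ^+ k.+1 < x <= rho ^+ k.
Proof.
move=> x0 x1.
have ex : exists k, rho ^+ k < x by apply: rho_small => //; [exact: rho0 | exact: rho2].
pose P := fun k => rho ^+ k < x.
have exP : exists k, P k by [].
case: (ex_minnP exP) => m hm hmin.
case: m hm hmin => [|k] hm hmin.
  by move: hm; rewrite /P expr0 => h; have := lt_le_trans h x1; rewrite ltxx.
exists k; move: hm; rewrite /P => -> /=.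
case: (lerP x (rho ^+ k)) => // h.
by have := hmin k h; rewrite ltnn.
Qed.

Lemma fc0 n : count (sp R p) (iota 0 n) = fc R p n.
Proof. by rewrite -[in RHS](add0n n) fc_cnt. Qed.

Lemma up_glob (d : R) : 0 < d -> d < 1 -> covnum E d <= 2 * d `^ (- b).
Proof.
move=> d0 d1.
have [n' /andP[hn1 hn2]] := scale _ d0 (ltW d1).
apply: le_trans (cov_glob R rho (sp R p) rho0 rho2 n'.+1 d (ltW hn1)) _.
rewrite fc0 natrX -P_nat.
have h1 : 2 `^ (fc R p n'.+1)%:R <= 2 `^ (p * n'.+1%:R) :> R by apply: P_le; apply: fc_le p0 _.
have h2 : 2 `^ (p * n'.+1%:R) = 2 `^ p * 2 `^ (p * n'%:R) :> R.
  by rewrite -P_add -[n'.+1%:R]natr1 mulrDr mulr1 addrC.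
have h3 : 2 `^ p <= 2 :> R by rewrite -{2}(powRr1 (ler0n _ 2)); apply: P_le; exact: ltW p1.
have h4 : d `^ b <= (rho ^+ n') `^ b.
  by apply: (@ge0_ler_powR R b (ltW hb0)); rewrite ?nnegrE ?(ltW d0) ?exprn_ge0 ?(ltW rho0).
have h5 : ((rho ^+ n') `^ b)^-1 <= (d `^ b)^-1.
  have q1 : 0 < (rho ^+ n') `^ b by apply: powR_gt0; apply: exprn_gt0; exact: rho0.
  have q2 : 0 < d `^ b by apply: powR_gt0.
  rewrite lef_pV2 ?posrE //.
rewrite rhoX -P_N opprK in h5.
have e : n'%:R * b / g = p * n'%:R by ring.
rewrite e in h5.
rewrite powRN.
have h6 : 0 <= 2 `^ (p * n'%:R) :> R by apply: powR_ge0.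
have h7 : 0 <= 2 `^ p :> R by apply: powR_ge0.
nra.
Qed.

Lemma up_loc (d l r : R) : 0 < d -> d < 1 -> 1 <= l -> r <= 2 -> d <= r - l ->
  covnum (E `&` `[l, r]) d <= 12 * (d / (r - l)) `^ (- g).
Proof.
have g0 := g0; have rho0 := rho0.
move=> d0 d1 hl hr hdrl.
have rl0 : 0 < r - l by exact: lt_le_trans d0 hdrl.
have rl1 : r - l <= 1 by lra.
have hlr : l <= r by lra.
have [n' /andP[hn1 hn2]] := scale _ d0 (ltW d1).
have [k /andP[hk1 hk2]] := scale _ rl0 rl1.
have hkn : (k <= n'.+1)%N.
  rewrite leqNgt; apply/negP => hlt.
  have := ler_wiXn2l (ltW rho0) rho1 (ltnW hlt).
  lra.
apply: le_trans (cov_loc R rho (sp R p) rho0 rho2 k n'.+1 d l r hkn (ltW hn1) hlr hk2) _.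
have hc : (count (sp R p) (iota k (n'.+1 - k)) <= n'.+1 - k)%N.
  by rewrite -[X in (_ <= X)%N](size_iota k) count_size.
apply: (@le_trans _ _ (3 * 2 ^+ (n'.+1 - k))).
  by rewrite -natrX -natrM ler_nat leq_mul2l /= leq_pexp2l.
set T := (2 : R) ^+ (n'.+1 - k).
have e1 : (2 : R) ^+ n' = T * 2 ^+ k / 2.
  rewrite /T -exprD subnK // exprSr mulfK //.
have hq : d / (r - l) <= rho ^+ n' * (rho ^+ k.+1)^-1.
  apply: ler_pM => //; [exact: ltW | by rewrite invr_ge0 ltW |].
  have q1 : 0 < rho ^+ k.+1 by rewrite exprn_gt0.
  by rewrite lef_pV2 ?posrE // ltW.
have hq2 : (d / (r - l)) `^ g <= (rho ^+ n' * (rho ^+ k.+1)^-1) `^ g.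
  apply: (@ge0_ler_powR R g (ltW g0)) => //; rewrite nnegrE.
    by rewrite divr_ge0 // ltW.
  by rewrite mulr_ge0 // ?invr_ge0 exprn_ge0 // ltW.
have n0 : 0 <= rho ^+ n' by rewrite exprn_ge0 // ltW.
have k0 : 0 < rho ^+ k.+1 by rewrite exprn_gt0.
have k0' : 0 <= (rho ^+ k.+1)^-1 by rewrite invr_ge0 ltW.
rewrite (powRM _ n0 k0') (powRV _ _ (ltW k0)) in hq2.
rewrite !rhoX in hq2.
have e2 : forall m : nat, m%:R * g / g = m%:R by move=> m; rewrite mulfK // gt_eqF.
rewrite !e2 !P_N !P_nat invrK in hq2.
have pos1 : 0 < (d / (r - l)) `^ g by apply: powR_gt0; rewrite divr_gt0.
have h3 : ((2 ^+ n')^-1 * 2 ^+ k.+1)^-1 <= ((d / (r - l)) `^ g)^-1.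
  rewrite lef_pV2 ?posrE // mulr_gt0 // ?invr_gt0 exprn_gt0 //.
rewrite powRN.
apply: (le_trans _ (ler_wpM2l _ h3)); last by [].
rewrite invfM invrK e1 exprSr.
have h2k : (2 : R) ^+ k != 0 by rewrite expf_neq0.
rewrite le_eqVlt; apply/orP; left; apply/eqP.
field.
by rewrite h2k.
Qed.

Lemma half_lt (n : nat) : 0 < rho ^+ n / 2 /\ rho ^+ n / 2 < 1 /\ rho ^+ n / 2 < rho ^+ n.
Proof.
have r0 := rho0; have r1 := rho1.
have h0 : 0 < rho ^+ n by rewrite exprn_gt0.
have h1 : rho ^+ n <= 1 by rewrite exprn_ile1 // ltW.
split; first by rewrite divr_gt0.
split; lra.
Qed.

Lemma dpow (n : nat) (a : R) : (rho ^+ n / 2) `^ (- a) = 2 `^ (n%:R * a / g + a).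
Proof.
have r0 := rho0.
rewrite powR_div_neg ?exprn_ge0 ?ltW // ?ltr0n // rhoX P_add.
congr (2 `^ _ * _); rewrite mulrN mulNr opprK //.
Qed.

Lemma low_glob (a c : R) : 0 < a -> a < b -> exists d, (0 < d /\ d < 1) /\ c * d `^ (- a) < covnum E d.
Proof.
have hg0 := g0; have hp0 := p0; have hp1 := p1.
move=> a0 ab.
have l2 : 0 < ln (2 : R) by rewrite ln_gt0 // ltr1n.
set K := `|c| / ln 2 + 1 + a.
set M := K * g / (b - a) + 1.
have th1 : 1 - p < 1 by lra.
have [b0 [n [hbn _ hM _ hfc]]] := main_run R p hp0 hp1 1 M th1 (lexx 1).
have [d0 [d1 dn]] := half_lt n.
exists (rho ^+ n / 2); split => //.
apply: lt_le_trans (lb_glob R rho (sp R p) rho0 rho2 n _ d0 dn).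
rewrite fc0 natrX -P_nat dpow.
have hnM : M <= n%:R.
  apply: (le_trans hM); rewrite ler_nat; exact: leq_subr.
set X := n%:R * a / g + a.
set Y := p * n%:R - 1 - X.
have hY : `|c| / ln 2 < Y.
  have ba0 : 0 < b - a by lra.
  have e : M * ((b - a) / g) = K + (b - a) / g.
    rewrite /M; field; apply/andP; split; rewrite ?gt_eqF //; lra.
  have h3 : 0 < (b - a) / g by rewrite divr_gt0.
  have h1 := @ler_wpM2r R _ (ltW h3) _ _ hnM.
  have e2 : Y = n%:R * ((b - a) / g) - 1 - a.
    by rewrite /Y /X; field; rewrite gt_eqF.
  rewrite e2; rewrite e in h1; rewrite /K in h1; lra.
have hc := P_big _ _ hY.
have h4 : 2 `^ (Y + X) <= 2 `^ (fc R p n)%:R.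
  apply: P_le; rewrite /Y; lra.
rewrite P_add in h4.
apply: lt_le_trans h4.
rewrite ltr_pM2r //; exact: powR_gt0.
Qed.

Lemma low_loc (th a c : R) : 0 <= th -> th < 1 -> 1 - p < th -> 0 < a -> a < g ->
  exists d l r, ((0 < d /\ d < 1) /\ (1 <= l /\ l < r /\ r <= 2)) /\
    (d < r - l /\ d `^ th <= r - l) /\
    c * d `^ (- a) * (r - l) `^ a < covnum (E `&` `[l, r]) d.
Proof.
have hg0 := g0; have hp0 := p0; have hp1 := p1; have r0 := rho0; have r1 := rho1.
move=> th0 th1 thp a0 ag.
have l2 : 0 < ln (2 : R) by rewrite ln_gt0 // ltr1n.
set K := `|c| / ln 2 + 1 + a.
set M := K * g / (g - a) + 1.
have [k [n [hkn hkth hM hcnt _]]] := main_run R p hp0 hp1 th M thp (ltW th1).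
have [d0 [d1 dn]] := half_lt n.
have hk0 : 0 < rho ^+ k by rewrite exprn_gt0.
have hk1 : rho ^+ k <= 1 by rewrite exprn_ile1 // ltW.
have hnk : rho ^+ n <= rho ^+ k by apply: ler_wiXn2l => //; exact: ltW.
exists (rho ^+ n / 2), 1, (1 + rho ^+ k).
have e1 : 1 + rho ^+ k - 1 = rho ^+ k by rewrite addrAC subrr add0r.
rewrite e1.
split; first by split => //; split; lra.
split.
  split; first lra.
  have h1 : (rho ^+ n / 2) `^ th <= (rho ^+ n) `^ th.
    apply: (@ge0_ler_powR R th th0); rewrite ?nnegrE; lra.
  apply: (le_trans h1).
  rewrite rhoX -(powRr1 (ltW hk0)) rhoX.
  apply: P_le; rewrite lerN2 mulr1.
  apply: ler_wpM2r; first by rewrite invr_ge0 ltW.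
  by rewrite mulrC.
have lb := lb_loc R rho (sp R p) rho0 rho2 k n (rho ^+ n / 2) hkn d0 dn.
rewrite hcnt natrX -P_nat in lb.
apply: (lt_le_trans _ lb).
rewrite dpow rhoX -mulrA -P_add.
set X := n%:R * a / g + a - k%:R * a / g.
have hY : `|c| / ln 2 < (n - k)%:R - X.
  have ga0 : 0 < g - a by lra.
  have h3 : 0 < (g - a) / g by rewrite divr_gt0.
  have e : M * ((g - a) / g) = K + (g - a) / g.
    rewrite /M; field; apply/andP; split; rewrite ?gt_eqF //; lra.
  have h1 := @ler_wpM2r R _ (ltW h3) _ _ hM.
  have e2 : (n - k)%:R - X = (n - k)%:R * ((g - a) / g) - a.
    by rewrite /X natrB //; field; rewrite gt_eqF.
  rewrite e2; rewrite e in h1; rewrite /K in h1; lra.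
have hc := P_big _ _ hY.
rewrite -[X in _ < 2 `^ X](subrK X ((n - k)%:R)) [X in _ < X]P_add.
rewrite ltr_pM2r //; exact: powR_gt0.
Qed.

End Main.
Lemma inf_eq (R : realType) (S : set R) x : S x -> (forall y, S y -> x <= y) -> inf S = x.
Proof.
move=> Sx lb; apply/le_anti/andP; split.
  by apply: (ge_inf _ Sx); exists x.
by apply: lb_le_inf => //; exists x.
Qed.

Theorem lemma6p1 (R : realType) :
  exists E : R -> R -> set R,
    (forall beta gamma : R, 0 < beta -> beta < gamma -> gamma <= 1 ->
       E beta gamma `<=` `[1, 2] /\ assouad_regular beta gamma (E beta gamma)) /\
    exists c : R, 1 <= c /\
      forall beta gamma : R, 0 < beta -> beta < gamma -> gamma <= 1 ->
      forall d : R, 0 < d < 1 ->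
        covnum (E beta gamma) d <= c * d `^ (- beta) /\
        forall l r : R, 1 <= l -> l <= r -> r <= 2 -> d < r - l ->
          covnum (E beta gamma `&` `[l, r]) d <= c * (d / (r - l)) `^ (- gamma).
Proof.
exists (fun b g => EE b g); split.
  move=> b g hb hbg hg1.
  have hg0 : 0 < g by apply: lt_trans hbg.
  have hp0 : 0 < b / g by rewrite divr_gt0.
  have hp1 : b / g < 1 by rewrite ltr_pdivrMr // mul1r.
  split; first exact: (Eset_sub R (rhoG g) (sp R (b / g)) (rho0 R g) (rho2 R b g hb hbg hg1)).
  have memA : forall l r d : R, 1 <= l -> r <= 2 -> 0 < d -> d < 1 -> d <= r - l ->
      covnum (EE b g `&` `[l, r]) d <= 12 * d `^ (- g) * (r - l) `^ g.
    move=> l r d hl hr d0 d1 hd.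
    have rl0 : 0 < r - l by apply: lt_le_trans hd.
    rewrite -mulrA -(powR_div_neg d (r - l) g (ltW d0) rl0).
    exact: (@up_loc R b g hb hbg hg1 d l r d0 d1 hl hr hd).
  have lowA : forall th a c, 0 <= th -> th < 1 -> 1 - b / g < th -> 0 < a -> a < g ->
      exists d l r, ((0 < d /\ d < 1) /\ (1 <= l /\ l < r /\ r <= 2)) /\
      (d < r - l /\ d `^ th <= r - l) /\
      c * d `^ (- a) * (r - l) `^ a < covnum (EE b g `&` `[l, r]) d.
    by move=> th a c; apply: (@low_loc R b g hb hbg hg1).
  have dA : dimA (EE b g) = g.
    rewrite /dimA; apply: inf_eq.
      split => //; exists 12 => l r hl hlr hr d /andP[d0 hd].
      apply: memA => //; [lra | exact: ltW].
    move=> a [a0 [c Hc]]; rewrite leNgt; apply/negP => ag.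
    have th0 : 0 <= 1 - b / g / 2 by lra.
    have [d [l [r [[[d0 d1] [hl [hlr hr]]] [[hdr _] hc]]]]] :=
      lowA (1 - b / g / 2) a c th0 ltac:(lra) ltac:(lra) a0 ag.
    have := Hc l r hl hlr hr d; rewrite d0 hdr => /(_ isT) h.
    by have := lt_le_trans hc h; rewrite ltxx.
  right; split => //.
    rewrite /dimM; apply: inf_eq.
      split => //; exists 2 => d /andP[d0 d1]; exact: (@up_glob R b g hb hbg hg1 d d0 d1).
    move=> a [a0 [c Hc]]; rewrite leNgt; apply/negP => ab.
    have [d [[d0 d1] hc]] := @low_glob R b g hb hbg hg1 a c a0 ab.
    have := Hc d; rewrite d0 d1 => /(_ isT) h.
    by have := lt_le_trans hc h; rewrite ltxx.
  move=> th th0 th1 th2; rewrite dA /udimA; apply: inf_eq.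
    split => //; exists 12 => d /andP[d0 d1] l r hl hlr hr hth.
    have hdd : d <= d `^ th by apply: ger1_powR; [rewrite d0 ltW | exact: ltW].
    apply: memA => //; exact: le_trans hdd hth.
  move=> a [a0 [c Hc]]; rewrite leNgt; apply/negP => ag.
  have [d [l [r [[[d0 d1] [hl [hlr hr]]] [[hdr hth] hc]]]]] := lowA th a c th0 th2 th1 a0 ag.
  have := Hc d; rewrite d0 d1 => /(_ isT l r hl (ltW hlr) hr hth) h.
  by have := lt_le_trans hc h; rewrite ltxx.
exists 12; split; first by rewrite ler1n.
move=> b g hb hbg hg1 d /andP[d0 d1]; split.
  apply: (le_trans (@up_glob R b g hb hbg hg1 d d0 d1)).
  by rewrite ler_wpM2r ?powR_ge0 // ler_nat.
move=> l r hl hlr hr hdr.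
exact: (@up_loc R b g hb hbg hg1 d l r d0 d1 hl hr (ltW hdr)).
Qed.
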